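(* For odd $N\ge5$ let $G_{N,1}$ be the graph with vertex set $\mathbb Z_N$ in which two distinct vertices $i,j$ are adjacent iff $j-i\not\equiv\pm1\pmod N$, and let $Kf(G_{N,1})=\sum_{\{u,v\}} R(u,v)$ be its Kirchhoff index (sum of effective resistances over unordered pairs of distinct vertices). With $\Delta=\sqrt{N(N-4)}$, \[ Kf(G_{N,1})\sim\frac{N^2}{\Delta}\sim N\qquad (N\to\infty\text{ through odd integers}). \]
   Context: Effective resistance uses unit conductance on every edge; $a_N\sim b_N$ means $a_N/b_N\to1$. *)

(* Defs.v *)
From HB Require Import structures.
From mathcomp Require Import all_boot all_order all_algebra.
From mathcomp Require Import all_classical all_reals all_analysis.
Set Implicit Arguments. Unset Strict Implicit. Unset Printing Implicit Defensive.
Import Order.TTheory GRing.Theory Num.Theory.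
Local Open Scope ring_scope.

Definition gadj (N : nat) (i j : 'I_N) : bool :=
  [&& i != j, ((j + N - i) %% N != 1)%N & ((j + N - i) %% N != N.-1)%N].

Definition gdeg (N : nat) (i : 'I_N) : nat := #|[pred j | gadj i j]|.

Definition glap (R : fieldType) (N : nat) : 'M[R]_N :=
  \matrix_(i, j) (if i == j then (gdeg i)%:R else if gadj i j then -1 else 0).

Definition evec (R : fieldType) (N : nat) (u v : 'I_N) : 'rV[R]_N :=
  \row_k ((k == u)%:R - (k == v)%:R).

(* Effective resistance: let x be a potential with x L = e_u - e_v
   (unit current injected at u, extracted at v; obtained from the
   partial inverse pinvmx, which solves the system whenever it is
   solvable, i.e. for connected graphs); R(u,v) = x_u - x_v. *)
Definition effres (R : fieldType) (N : nat) (u v : 'I_N) : R :=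
  let x := evec R u v *m pinvmx (glap R N) in x 0 u - x 0 v.

Definition kirchhoff (R : fieldType) (N : nat) : R :=
  \sum_(u < N) \sum_(v < N | (u < v)%N) effres R u v.

(* Main.v *)
Require Import Defs.
From HB Require Import structures.
From mathcomp Require Import all_boot all_order all_algebra.
From mathcomp Require Import all_classical all_reals all_analysis.
From mathcomp Require Import ring lra zify.
Import Order.TTheory GRing.Theory Num.Theory numFieldNormedType.Exports.
Set Implicit Arguments. Unset Strict Implicit. Unset Printing Implicit Defensive.

Definition cyc (N : nat) (i j : 'I_N) : bool :=
  ((j + N - i) %% N == 1)%N || ((j + N - i) %% N == N.-1)%N.

Lemma diffmod N (i j : 'I_N) :
  ((j + N - i) %% N = if (i <= j)%N then j - i else j + N - i)%N.
Proof.
have hi := ltn_ord i; have hj := ltn_ord j.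
case: ifP => hij.
  have -> : (j + N - i = (j - i) + N)%N by lia.
  by rewrite modnDr modn_small //; lia.
by rewrite modn_small //; lia.
Qed.

Lemma succmod N (i : 'I_N) :
  (i.+1 %% N = if (i.+1 < N)%N then i.+1 else 0)%N.
Proof.
have hi := ltn_ord i; case: ifP => h; first by rewrite modn_small.
have -> : i.+1 = N by lia.
by rewrite modnn.
Qed.

Lemma predmod N (i : 'I_N) :
  ((i + N).-1 %% N = if (0 < i)%N then i.-1 else N.-1)%N.
Proof.
have hi := ltn_ord i; case: ifP => h.
  have -> : ((i + N).-1 = i.-1 + N)%N by lia.
  by rewrite modnDr modn_small //; lia.
have -> : (i + N).-1 = N.-1 by lia.
by rewrite modn_small //; lia.
Qed.

Lemma cycE N (i j : 'I_N) : cyc i j = (j == ordS i) || (j == ord_pred i).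
Proof.
rewrite /cyc diffmod -!val_eqE /= succmod predmod.
have hi := ltn_ord i; have hj := ltn_ord j.
by case: ifP => h1; case: ifP => h2; case: ifP => h3; apply/idP/idP; lia.
Qed.

Lemma cyc_sym N (i j : 'I_N) : cyc i j = cyc j i.
Proof.
rewrite /cyc !diffmod; have hi := ltn_ord i; have hj := ltn_ord j.
by case: ifP => h1; case: ifP => h2; apply/idP/idP; lia.
Qed.

Lemma cyc_refl N (i : 'I_N) : (3 <= N)%N -> cyc i i = false.
Proof.
move=> N3; rewrite /cyc !diffmod leqnn; apply/negbTE; lia.
Qed.

Lemma ordS_pred_neq N (i : 'I_N) : (3 <= N)%N -> ordS i != ord_pred i.
Proof.
move=> N3; rewrite -val_eqE /= succmod predmod; have hi := ltn_ord i.
by case: ifP => h1; case: ifP => h2; lia.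
Qed.

Lemma hcount N : (2 * \sum_(0 <= u < N) \sum_(0 <= v < N) (u < v) = N * N.-1)%N.
Proof.
elim: N => [|N IH]; first by rewrite big_geq.
rewrite big_nat_recr //=.
have E1 : (\sum_(0 <= u < N) \sum_(0 <= v < N.+1) (u < v)
        = \sum_(0 <= u < N) \sum_(0 <= v < N) (u < v) + N)%N.
  rewrite -[X in (_ + X)%N](subn0 N) -[X in (_ + X)%N]muln1 -sum_nat_const_nat -big_split /=.
  apply: eq_big_nat => u /andP[_ hu]; by rewrite big_nat_recr //= hu.
have E2 : (\sum_(0 <= v < N.+1) (N < v) = 0)%N.
  by rewrite big_nat_recr //= ltnn addn0; apply: big1_seq => v; rewrite mem_index_iota => /andP[_ h]; rewrite ltnNge ltnW.
rewrite E1 E2; nia.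
Qed.

Local Open Scope ring_scope.

Lemma cyc_row (R : ringType) N (i : 'I_N) : (3 <= N)%N ->
  \sum_j (cyc i j)%:R = 2 :> R.
Proof.
move=> N3; rewrite (bigD1 (ordS i)) //= (bigD1 (ord_pred i)) /=; last first.
  by rewrite eq_sym ordS_pred_neq.
rewrite big1 ?addr0; last first.
  by move=> j /andP[h1 h2]; rewrite cycE (negbTE h1) (negbTE h2).
by rewrite !cycE !eqxx orbT.
Qed.

Lemma gadjE N (i j : 'I_N) : gadj i j = (i != j) && ~~ cyc i j.
Proof. by rewrite /gadj /cyc negb_or. Qed.

Lemma gdegE (R : comRingType) N (i : 'I_N) : (3 <= N)%N ->
  (gdeg i)%:R = N%:R - 3 :> R.
Proof.
move=> N3.
have -> : gdeg i = (\sum_j gadj i j)%N.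
  rewrite /gdeg -sum1_card big_mkcond /=; apply: eq_bigr => j _; rewrite !inE.
  by case: gadj.
rewrite natr_sum.
have E : forall j, (gadj i j)%:R = 1 - (i == j)%:R - (cyc i j)%:R :> R.
  move=> j; rewrite gadjE; case: (eqVneq i j) => [->|hij] /=.
    by rewrite cyc_refl // subr0 subrr.
  by case: cyc => /=; rewrite ?subr0 ?subrr.
rewrite (eq_bigr _ (fun j _ => E j)) !sumrB cyc_row // sumr_const card_ord.
rewrite (bigD1 i) //= eqxx big1 ?addr0; last by move=> j; rewrite eq_sym => /negbTE ->.
have -> : (N%:R = (N - 3)%:R + 3%:R :> R) by rewrite -natrD subnK.
by rewrite /= ?mulr1n; ring.
Qed.

Lemma glapE (R : fieldType) N (i j : 'I_N) : (3 <= N)%N ->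
  glap R N i j = (N%:R - 2) * (i == j)%:R - 1 + (cyc i j)%:R.
Proof.
move=> N3; rewrite /glap mxE; case: (eqVneq i j) => [->|hij].
  by rewrite gdegE // cyc_refl //= mulr1 addr0; ring.
rewrite gadjE hij /= mulr0 add0r; case: cyc => /=; last by rewrite addr0.
by rewrite /= ?mulr1n addNr.
Qed.

Lemma sum_delta (R : ringType) N (f : 'I_N -> R) (j : 'I_N) :
  \sum_i f i * (i == j)%:R = f j.
Proof.
rewrite (bigD1 j) //= eqxx mulr1 big1 ?addr0 // => i /negbTE ->.
by rewrite mulr0.
Qed.

Section CoreS.
Variables (R : realFieldType) (N : nat) (A : 'I_N -> 'I_N -> R) (y : 'I_N -> R).
Hypothesis A_ge0 : forall i j, 0 <= A i j.
Hypothesis A_sym : forall i j, A i j = A j i.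
Hypothesis A_col : forall j, \sum_i A i j = 2.

Lemma A_row i : \sum_j A i j = 2.
Proof. by rewrite -(A_col i); apply: eq_bigr => j _; rewrite A_sym. Qed.

Let a j := \sum_i y i * A i j.
Let S := \sum_i y i ^+ 2.
Let Q := \sum_j y j * a j.
Let T := \sum_j a j ^+ 2.

Lemma sumAl (f : 'I_N -> R) : \sum_i \sum_j A i j * f i = 2 * \sum_i f i.
Proof.
rewrite mulr_sumr; apply: eq_bigr => i _.
by rewrite -mulr_suml A_row mulrC.
Qed.

Lemma sumAr (f : 'I_N -> R) : \sum_i \sum_j A i j * f j = 2 * \sum_j f j.
Proof.
rewrite exchange_big mulr_sumr; apply: eq_bigr => j _.
by rewrite -mulr_suml A_col mulrC.
Qed.

Lemma sumAQ : \sum_i \sum_j A i j * (y i * y j) = Q.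
Proof.
rewrite exchange_big; apply: eq_bigr => j _; rewrite /a mulr_sumr.
by apply: eq_bigr => i _; ring.
Qed.

Lemma Q_le : Q <= 2 * S.
Proof.
have H : 0 <= \sum_i \sum_j A i j * (y i - y j) ^+ 2.
  by apply: sumr_ge0 => i _; apply: sumr_ge0 => j _; rewrite mulr_ge0 ?sqr_ge0.
have E : \sum_i \sum_j A i j * (y i - y j) ^+ 2 =
   \sum_i \sum_j A i j * (y i ^+ 2) + \sum_i \sum_j A i j * (y j ^+ 2)
   - 2 * \sum_i \sum_j A i j * (y i * y j).
  rewrite mulr_sumr -big_split -sumrB /=; apply: eq_bigr => i _.
  rewrite mulr_sumr -big_split -sumrB /=; apply: eq_bigr => j _; ring.
move: H; rewrite E sumAl sumAr sumAQ -/S; lra.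
Qed.

Lemma Q_ge : - (2 * S) <= Q.
Proof.
have H : 0 <= \sum_i \sum_j A i j * (y i + y j) ^+ 2.
  by apply: sumr_ge0 => i _; apply: sumr_ge0 => j _; rewrite mulr_ge0 ?sqr_ge0.
have E : \sum_i \sum_j A i j * (y i + y j) ^+ 2 =
   \sum_i \sum_j A i j * (y i ^+ 2) + \sum_i \sum_j A i j * (y j ^+ 2)
   + 2 * \sum_i \sum_j A i j * (y i * y j).
  rewrite mulr_sumr -big_split -big_split /=; apply: eq_bigr => i _.
  rewrite mulr_sumr -big_split -big_split /=; apply: eq_bigr => j _; ring.
move: H; rewrite E sumAl sumAr sumAQ -/S; lra.
Qed.

Lemma T_le : T <= 4 * S.
Proof.
have H : 0 <= \sum_j \sum_i A i j * (y i - a j / 2) ^+ 2.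
  by apply: sumr_ge0 => i _; apply: sumr_ge0 => j _; rewrite mulr_ge0 ?sqr_ge0.
have E : \sum_j \sum_i A i j * (y i - a j / 2) ^+ 2 = 2 * S - T / 2.
  have E1 : \sum_j \sum_i A i j * (y i - a j / 2) ^+ 2 =
    \sum_j \sum_i A i j * y i ^+ 2 - \sum_j (a j * \sum_i y i * A i j)
    + \sum_j (a j ^+ 2 / 4 * \sum_i A i j).
    rewrite -sumrB -big_split /=; apply: eq_bigr => j _.
    rewrite !mulr_sumr -sumrB -big_split /=; apply: eq_bigr => i _; by field; rewrite ?pnatr_eq0.
  rewrite E1 exchange_big /= sumAl.
  have e2 : \sum_j a j * \sum_i y i * A i j = T.
    by apply: eq_bigr => j _; rewrite expr2.
  have e3 : \sum_j a j ^+ 2 / 4 * \sum_i A i j = T / 2.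
    by rewrite /T mulr_suml; apply: eq_bigr => j _; rewrite A_col; field.
  by rewrite e2 e3 /S; field.
move: H; rewrite E; lra.
Qed.

Variable b : 'I_N -> R.
Hypothesis hb : forall j, b j = (N%:R - 2) * y j + \sum_i y i * A i j.
Let r := \sum_j y j * b j.

Lemma r_eq : r = (N%:R - 2) * S + Q.
Proof.
rewrite /r /S /Q mulr_sumr -big_split /=; apply: eq_bigr => j _.
rewrite hb /a; ring.
Qed.

Lemma b2_eq : \sum_j b j ^+ 2 = (N%:R - 2) ^+ 2 * S + 2 * (N%:R - 2) * Q + T.
Proof.
rewrite /S /Q /T !mulr_sumr -!big_split /=; apply: eq_bigr => j _.
rewrite hb /a; ring.
Qed.

Lemma r_lower : (4 <= N)%N -> \sum_j b j ^+ 2 = 2 -> 2 <= N%:R * r.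
Proof.
move=> N4 hb2; have n4 : 4 <= N%:R :> R by rewrite (ler_nat R 4).
have h1 := ler_wpM2l (_ : 0 <= N%:R - 4) Q_le.
have h2 := T_le.
have S0 : 0 <= S by apply: sumr_ge0 => i _; apply: sqr_ge0.
move: hb2; rewrite b2_eq r_eq => hb2.
have {}h1 := h1 ltac:(lra).
nra.
Qed.

Lemma S_ge (u v : 'I_N) : u != v -> y u ^+ 2 + y v ^+ 2 <= S.
Proof.
move=> uv; rewrite /S (bigD1 u) //= (bigD1 v) /=; last by rewrite eq_sym.
rewrite addrA lerDl.
by apply: sumr_ge0 => i _; apply: sqr_ge0.
Qed.

Lemma r_upper (u v : 'I_N) : (4 <= N)%N -> u != v -> y u - y v = r ->
  (N%:R - 4) * r <= 2.
Proof.
move=> N4 uv hr; have n4 : 4 <= N%:R :> R by rewrite (ler_nat R 4).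
have h1 := Q_ge; have h2 := S_ge uv.
have S0 : 0 <= S by apply: sumr_ge0 => i _; apply: sqr_ge0.
have hrS : (N%:R - 4) * S <= r by rewrite r_eq; lra.
have hr2 : r ^+ 2 <= 2 * S.
  rewrite -hr; have := sqr_ge0 (y u + y v); lra.
have [r0|r0] := lerP r 0.
  have : (N%:R - 4) * r <= 0 by rewrite mulr_ge0_le0 //; lra.
  lra.
have h3 : (N%:R - 4) * r * r <= 2 * r.
  have := ler_wpM2l (_ : 0 <= N%:R - 4) hr2; rewrite expr2 mulrA => h.
  have := h ltac:(lra); nra.
rewrite -(ler_pM2r r0); lra.
Qed.

Lemma r0_S0 : (4 < N)%N -> r = 0 -> forall i, y i = 0.
Proof.
move=> N5 hr0 i; have n5 : 5 <= N%:R :> R by rewrite (ler_nat R 5).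
have h1 := Q_ge.
have S0 : 0 <= S by apply: sumr_ge0 => k _; apply: sqr_ge0.
have hrS : (N%:R - 4) * S <= r by rewrite r_eq; lra.
have SS : S = 0 by nra.
have : y i ^+ 2 = 0.
  move/eqP: SS; rewrite /S psumr_eq0 => [/allP/(_ i)|k _]; last exact: sqr_ge0.
  by rewrite mem_index_enum => /(_ isT) /implyP /(_ isT) /eqP.
by move/eqP; rewrite sqrf_eq0 => /eqP.
Qed.
End CoreS.

Lemma effres_bounds (R : realFieldType) N (u v : 'I_N) : (5 <= N)%N -> u != v ->
  2 <= N%:R * effres R u v /\ (N%:R - 4) * effres R u v <= 2.
Proof.
move=> N5 uv; have N3 : (3 <= N)%N by lia.
have n5 : 5 <= N%:R :> R by rewrite (ler_nat R 5).
pose A := fun i j : 'I_N => (cyc i j)%:R : R.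
have A_ge0 : forall i j, 0 <= A i j by move=> i j; exact: ler0n.
have A_sym : forall i j, A i j = A j i by move=> i j; rewrite /A cyc_sym.
have A_col : forall j, \sum_i A i j = 2.
  by move=> j; rewrite -(cyc_row R j N3); apply: eq_bigr => i _; rewrite /A cyc_sym.
have A_row : forall i, \sum_j A i j = 2 by move=> i; exact: cyc_row.
pose M : 'M[R]_N := \matrix_(i, j) ((N%:R - 2) * (i == j)%:R + A i j).
have MmulE : forall w : 'rV[R]_N, forall j,
    (w *m M) 0 j = (N%:R - 2) * w 0 j + \sum_i w 0 i * A i j.
  move=> w j; rewrite mxE.
  under eq_bigr do rewrite mxE mulrDr.
  rewrite big_split /= (eq_bigr (fun i => (N%:R - 2) * (w 0 i * (i == j)%:R))).
    by rewrite -mulr_sumr sum_delta.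
  by move=> i _; ring.
have Mu : M \in unitmx.
  rewrite -row_free_unit -kermx_eq0; apply/rowV0P => w /sub_kermxP wM.
  have yz := @r0_S0 R N A (fun i => w 0 i) A_ge0 A_sym A_col (fun _ => 0).
  apply/rowP => i; rewrite [in RHS]mxE; apply: yz => //.
    by move=> j; rewrite -MmulE wM mxE.
  by rewrite big1 // => j _; rewrite mulr0.
pose bv := evec R u v.
have bvE : forall j, bv 0 j = (j == u)%:R - (j == v)%:R by move=> j; rewrite mxE.
have sdl : forall (f : 'I_N -> R) k, \sum_j f j * (j == k)%:R = f k by move=> f k; exact: sum_delta.
have sbv : \sum_j bv 0 j = 0.
  under eq_bigr => j _ do rewrite bvE -[(j == u)%:R]mul1r -[(j == v)%:R]mul1r.
  by rewrite sumrB !sdl subrr.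
have sbv2 : \sum_j bv 0 j ^+ 2 = 2.
  have E : forall j, bv 0 j ^+ 2 = 1 * (j == u)%:R + 1 * (j == v)%:R.
    move=> j; rewrite bvE; case E1: (j == u); case E2: (j == v) => /=.
    - by move/eqP: E1 => E1; move: uv; rewrite -E1 E2.
    - by rewrite subr0 expr1n !mul1r addr0.
    - by rewrite sub0r sqrrN expr1n !mul1r add0r.
    - by rewrite subrr expr0n !mul1r addr0.
  by rewrite (eq_bigr _ (fun j _ => E j)) big_split /= !sdl.
pose z := bv *m invmx M.
have zM : z *m M = bv by rewrite /z mulmxKV.
have sz : \sum_i z 0 i = 0.
  have : \sum_j (z *m M) 0 j = N%:R * \sum_i z 0 i.
    under eq_bigr do rewrite MmulE.
    rewrite big_split /= -mulr_sumr exchange_big /=.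
    under [X in _ + X = _]eq_bigr do rewrite -mulr_sumr A_row.
    rewrite -mulr_suml; ring.
  rewrite zM sbv => /esym /eqP; rewrite mulf_eq0 pnatr_eq0 => /orP[/eqP N0|/eqP //].
  lia.
have zL : z *m glap R N = bv.
  apply/rowP => j; rewrite -zM MmulE mxE.
  under eq_bigr do rewrite glapE // !mulrDr mulrN mulr1.
  rewrite !big_split /= sumrN sz subr0.
  rewrite (eq_bigr (fun i => (N%:R - 2) * (z 0 i * (i == j)%:R))); last by move=> i _; ring.
  by rewrite -mulr_sumr sdl.
have hsub : (bv <= glap R N)%MS by rewrite -zL submxMl.
pose x := bv *m pinvmx (glap R N).
have xL : x *m glap R N = bv by rewrite /x mulmxKpV.
have -> : effres R u v = x 0 u - x 0 v by [].
pose sx := \sum_i x 0 i.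
pose m := sx / N%:R.
have Nm : N%:R * m = sx by rewrite /m mulrC divfK // pnatr_eq0; lia.
pose y := fun i => x 0 i - m.
have hb : forall j, bv 0 j = (N%:R - 2) * y j + \sum_i y i * A i j.
  move=> j; rewrite -xL mxE.
  under eq_bigr do rewrite glapE // !mulrDr mulrN mulr1.
  rewrite !big_split /= -/sx.
  rewrite (eq_bigr (fun i => (N%:R - 2) * (x 0 i * (i == j)%:R))); last by move=> i _; ring.
  rewrite -mulr_sumr sdl /y.
  under [X in _ = _ + X]eq_bigr do rewrite mulrBl.
  rewrite sumrB -mulr_sumr A_col.
  rewrite sumrN -/sx -Nm; ring.
have hr : y u - y v = \sum_j y j * bv 0 j.
  under eq_bigr do rewrite bvE mulrBr.
  by rewrite sumrB !sdl.
have exy : x 0 u - x 0 v = y u - y v by rewrite /y; ring.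
rewrite exy hr; split.
  exact: (@r_lower R N A y A_ge0 A_sym A_col (fun j => bv 0 j) hb ltac:(lia) sbv2).
exact: (@r_upper R N A y A_ge0 A_sym A_col (fun j => bv 0 j) hb u v ltac:(lia) uv hr).
Qed.
Lemma gcount (R : ringType) N (c : R) :
  \sum_(u < N) \sum_(v < N | (u < v)%N) c =
  c * (\sum_(0 <= u < N) \sum_(0 <= v < N) (u < v))%N%:R.
Proof.
rewrite big_mkord natr_sum mulr_sumr; apply: eq_bigr => u _.
rewrite big_mkord natr_sum mulr_sumr big_mkcond /=; apply: eq_bigr => v _.
by case: ltnP => _; rewrite ?mulr1 ?mulr0.
Qed.

Lemma kbounds (R : realFieldType) N : (5 <= N)%N ->
  N%:R - 1 <= kirchhoff R N /\
  (N%:R - 4) * kirchhoff R N <= N%:R * (N%:R - 1).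
Proof.
move=> N5; have n5 : 5 <= N%:R :> R by rewrite (ler_nat R 5).
pose G : R := (\sum_(0 <= u < N) \sum_(0 <= v < N) (u < v))%N%:R.
have hG : 2 * G = N%:R * (N%:R - 1).
  rewrite /G -natrM hcount natrM; congr (_ * _).
  by rewrite -subn1 natrB //; lia.
split.
  apply: (@le_trans _ _ (\sum_(u < N) \sum_(v < N | (u < v)%N) (2 / N%:R))).
    rewrite gcount mulrAC hG mulrAC divff ?mul1r //.
    by rewrite pnatr_eq0; lia.
  apply: ler_sum => u _; apply: ler_sum => v uv.
  have uvn : u != v by rewrite neq_ltn uv.
  have [h _] := effres_bounds R N5 uvn.
  by rewrite mulrC ler_pdivrMl; last lra.
rewrite /kirchhoff mulr_sumr.
apply: (@le_trans _ _ (\sum_(u < N) \sum_(v < N | (u < v)%N) 2)).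
  apply: ler_sum => u _; rewrite mulr_sumr; apply: ler_sum => v uv.
  have uvn : u != v by rewrite neq_ltn uv.
  by have [_ h] := effres_bounds R N5 uvn.
by rewrite gcount hG.
Qed.

Lemma squeeze_alg (R : realFieldType) (n K s t : R) :
  5 <= n -> 1 <= t -> t <= n - 4 -> n - 1 <= K -> (n - 4) * K <= n * (n - 1) ->
  n - 4 <= s -> s <= n ->
  [/\ 1 - 5 / t <= K / n, K / n <= 1 + 5 / t,
      1 - 5 / t <= K / (n ^+ 2 / s) & K / (n ^+ 2 / s) <= 1 + 5 / t].
Proof.
move=> n5 t1 tn hK1 hK2 hs1 hs2.
have n0 : n != 0 by rewrite gt_eqF //; lra.
have n40 : n - 4 != 0 by rewrite gt_eqF //; lra.
have t0 : t != 0 by rewrite gt_eqF //; lra.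
have s0 : s != 0 by rewrite gt_eqF //; lra.
set w := n^-1; set v := (n - 4)^-1; set u := t^-1.
have nw : n * w = 1 by rewrite mulfV.
have nv : (n - 4) * v = 1 by rewrite mulfV.
have tu : t * u = 1 by rewrite mulfV.
have w0 : 0 < w by rewrite invr_gt0; lra.
have v0 : 0 < v by rewrite invr_gt0; lra.
have u0 : 0 < u by rewrite invr_gt0; lra.
have vu : v <= u by rewrite lef_pV2 ?posrE //; lra.
have wv : w <= v by rewrite lef_pV2 ?posrE //; lra.
have E1 : K / n = K * w by [].
have E2 : K / (n ^+ 2 / s) = K * s * (w * w).
  by rewrite invf_div /w; field.
rewrite E2 -/u !(mulrC 5 u).
have L1 : 1 - 5 * u <= K * w.
  have : (n - 1) * w <= K * w by rewrite ler_wpM2r //; lra.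
  have -> : (n - 1) * w = 1 - w by rewrite mulrBl nw mul1r.
  lra.
have U1 : K * w <= 1 + 3 * v.
  have h : (n - 4) * K * (w * v) <= n * (n - 1) * (w * v).
    by rewrite ler_wpM2r //; apply: mulr_ge0; lra.
  have e1 : (n - 4) * K * (w * v) = K * w.
    have -> : (n - 4) * K * (w * v) = K * w * ((n - 4) * v) by ring.
    by rewrite nv mulr1.
  have e2 : n * (n - 1) * (w * v) = 1 + 3 * v.
    have -> : n * (n - 1) * (w * v) = (n * w) * ((n - 4 + 3) * v) by ring.
    by rewrite nw mulrDl nv mul1r.
  lra.
have Ks : (n - 1) * (n - 4) <= K * s by apply: ler_pM => //; lra.
have L2 : 1 - 5 * w <= K * s * (w * w).
  have : (n - 1) * (n - 4) * (w * w) <= K * s * (w * w) by rewrite ler_wpM2r //; apply: mulr_ge0; lra.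
  have -> : (n - 1) * (n - 4) * (w * w) = (1 - w) * (1 - 4 * w).
    have -> : (n - 1) * (n - 4) * (w * w) = (n * w - w) * (n * w - 4 * w) by ring.
    by rewrite nw.
  nra.
have U2 : K * s * (w * w) <= K * w.
  have K0 : 0 <= K by lra.
  have : K * s * (w * w) <= K * n * (w * w).
    by rewrite ler_wpM2r ?ler_wpM2l //; apply: mulr_ge0; lra.
  have -> : K * n * (w * w) = K * w * (n * w) by ring.
  by rewrite nw mulr1.
split; lra.
Qed.

Local Open Scope classical_set_scope.
Unset Implicit Arguments.

Theorem mainTheorem12 (R : realType) :
  (fun k : nat =>
     kirchhoff R (2 * k + 5)%N /
       (((2 * k + 5)%N%:R) ^+ 2 /
          Num.sqrt ((2 * k + 5)%N%:R * ((2 * k + 5)%N%:R - 4))))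
    @ \oo --> (1 : R)
  /\
  (fun k : nat => kirchhoff R (2 * k + 5)%N / (2 * k + 5)%N%:R)
    @ \oo --> (1 : R).
Proof.
pose g1 := fun k : nat => 1 - 5 / (k.+1%:R : R).
pose g2 := fun k : nat => 1 + 5 / (k.+1%:R : R).
have h5 : (fun k : nat => 5 / (k.+1%:R : R)) @ \oo --> 0.
  have := cvgM (cvg_cst (5:R)) (@cvg_harmonic R).
  rewrite mulr0.
  by move=> h; apply: h; exact: filter_class.
have g1c : g1 @ \oo --> (1:R).
  have H := @cvgB R R _ \oo _ (fun=> (1:R)) (fun k => 5 / (k.+1%:R : R)) (1:R) (0:R)
    (@cvg_cst _ (1:R) _ _ _) h5.
  rewrite subr0 in H; exact: H.
have g2c : g2 @ \oo --> (1:R).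
  have H := @cvgD R R _ \oo _ (fun=> (1:R)) (fun k => 5 / (k.+1%:R : R)) (1:R) (0:R)
    (@cvg_cst _ (1:R) _ _ _) h5.
  rewrite addr0 in H; exact: H.
have B : forall k : nat,
  let N := (2 * k + 5)%N in
  let n := N%:R : R in
  let s := Num.sqrt (n * (n - 4)) in
  [/\ g1 k <= kirchhoff R N / n, kirchhoff R N / n <= g2 k,
      g1 k <= kirchhoff R N / (n ^+ 2 / s) & kirchhoff R N / (n ^+ 2 / s) <= g2 k].
  move=> k N n s.
  have N5 : (5 <= N)%N by rewrite /N; lia.
  have [Kl Ku] := kbounds R N5.
  have n5 : 5 <= n by rewrite /n (ler_nat R 5).
  have t1 : 1 <= k.+1%:R :> R by rewrite (ler_nat R 1).
  have tn : k.+1%:R <= n - 4 :> R.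
    have h : (k.+1 + 4)%N%:R <= n by rewrite /n ler_nat /N; lia.
    rewrite natrD in h; lra.
  have s0 : 0 <= s by exact: sqrtr_ge0.
  have s2 : s ^+ 2 = n * (n - 4) by rewrite sqr_sqrtr //; apply: mulr_ge0; lra.
  have hs1 : n - 4 <= s by nra.
  have hs2 : s <= n by nra.
  exact: (squeeze_alg n5 t1 tn Kl Ku hs1 hs2).
split.
  apply: (squeeze_cvgr _ g1c g2c); apply: nearW => k.
  by have [_ _ h1 h2] := B k; rewrite h1 h2.
apply: (squeeze_cvgr _ g1c g2c); apply: nearW => k.
by have [h1 h2 _ _] := B k; rewrite h1 h2.
Qed.
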